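(* Let $E$ be a finite set and $\mathcal{A}$ a set-arrangement on $E$, with local Lie algebras $L_A=\mathcal{F}(A)/\langle R_A\rangle$, $R_A\subseteq[\mathcal{F}(A),\mathcal{F}(A)]$, for $A\in\mathcal{A}$, and let $\mathcal{L}=\mathcal{F}(E)/\langle R\rangle$ with $$R=\bigcup_{A\in\mathcal{A}}R_A\ \cup\ \{[x,y]:\ x,y\in E,\ \{x,y\}\not\subseteq A \text{ for every } A\in\mathcal{A}\}.$$ Assume $\mathcal{L}$ satisfies replacement. Let $\mathcal{B}_1,\dots,\mathcal{B}_k$ be pairwise disjoint subsets of $\mathcal{A}$, each closed in $\mathcal{A}$, with $\bigcup_{i=1}^k\mathcal{B}_i=\mathcal{A}$. For each $i$ let $\pi_{\mathcal{B}_i}:\mathcal{L}\to L_{\mathcal{B}_i}$ be the Lie homomorphism sending the elements of $E\setminus\mathrm{supp}(\mathcal{B}_i)$ to $0$ and fixing those of $\mathrm{supp}(\mathcal{B}_i)$, let $I_{\mathcal{B}_i}=\ker\pi_{\mathcal{B}_i}$, and let $J$ be the kernel of the surjective Lie homomorphism $\bigoplus_{i=1}^k\pi'_{\mathcal{B}_i}:\mathcal{L}'\to\bigoplus_{i=1}^kL'_{\mathcal{B}_i}$, where $\pi'_{\mathcal{B}_i}$ is the restriction of $\pi_{\mathcal{B}_i}$ to $\mathcal{L}'$. Then: (1) $J$ is generated as an ideal of $\mathcal{L}$ by the elements $[x,[y,z]]$ with $y,z\in\mathrm{supp}(\mathcal{B}_i)$, $x\in E\setminus\mathrm{supp}(\mathcal{B}_i)$,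 $i=1,\dots,k$; (2) $J=0$ if and only if $[x,[y,z]]=0$ in $\mathcal{L}$ for all $y,z\in\mathrm{supp}(\mathcal{B}_i)$, $x\in E\setminus\mathrm{supp}(\mathcal{B}_i)$, $i=1,\dots,k$; (3) for each $i=1,\dots,k$, $I_{\mathcal{B}_i}$ equals the Lie subalgebra of $\mathcal{L}$ generated by $E\setminus\mathrm{supp}(\mathcal{B}_i)$.
   Context: All Lie algebras are over a fixed field; $\mathcal{F}(X)$ is the free Lie algebra on $X$, $\langle S\rangle$ the ideal generated by $S$, and $M'=[M,M]$ the derived algebra. A set-arrangement on a finite set $E$ is a set $\mathcal{A}$ of subsets of $E$ with $|A|\ge3$ for all $A\in\mathcal{A}$ and $|A\cap B|\le1$ for distinct $A,B\in\mathcal{A}$. $\mathcal{L}$ satisfies replacement if for every $A\in\mathcal{A}$ and every $x\in A$ that also lies in some $B\in\mathcal{A}$ with $B\ne A$, one has $L_A'\subseteq$ the Lie subalgebra of $L_A$ generated by $A\setminus\{x\}$. For $\mathcal{B}\subseteq\mathcal{A}$ put $\mathrm{supp}(\mathcal{B})=\bigcup_{B\in\mathcal{B}}B$; $\mathcal{B}$ is closed in $\mathcal{A}$ if $|A\cap\mathrm{supp}(\mathcal{B})|\le1$ for all $A\in\mathcal{A}\setminus\mathcal{B}$. For such $\mathcal{B}$, $L_{\mathcal{B}}=\mathcal{F}(\mathrm{supp}(\mathcal{B}))/\langle R_{\mathcal{B}}\rangle$ where $R_{\mathcal{B}}=\bigcup_{B\in\mathcal{B}}R_B\cup\{[x,y]:\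 x,y\in\mathrm{supp}(\mathcal{B}),\ \{x,y\}\not\subseteq B\text{ for all }B\in\mathcal{B}\}$. Elements of $E$ are identified with their images in $\mathcal{L}$. *)

(* Defs.v *)
From HB Require Import structures.
From mathcomp Require Import all_boot all_order all_algebra.
Set Implicit Arguments. Unset Strict Implicit. Unset Printing Implicit Defensive.
Import GRing.Theory.
Local Open Scope ring_scope.

Section Lie.
Variable K : fieldType.

Record lie_axioms (V : lmodType K) (br : V -> V -> V) : Prop := LieAxioms {
  lie_linl : forall a (x y z : V), br (a *: x + y) z = a *: br x z + br y z;
  lie_linr : forall a (x y z : V), br z (a *: x + y) = a *: br z x + br z y;
  lie_alt : forall x, br x x = 0;
  lie_jacobi : forall x y z, br x (br y z) + br y (br z x) + br z (br x y) = 0 }.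

Record lieAlg := LieAlg {
  lie_carrier :> lmodType K;
  lie_br : lie_carrier -> lie_carrier -> lie_carrier;
  lie_ax : lie_axioms lie_br }.

Definition lie_hom (L M : lieAlg) (h : L -> M) : Prop :=
  (forall a (x y : L), h (a *: x + y) = a *: h x + h y) /\
  (forall x y : L, h (lie_br x y) = lie_br (h x) (h y)).

Definition subspace_closed (L : lieAlg) (P : L -> Prop) : Prop :=
  P 0 /\ forall a (x y : L), P x -> P y -> P (a *: x + y).
Definition subalg_closed (L : lieAlg) (P : L -> Prop) : Prop :=
  subspace_closed P /\ forall x y : L, P x -> P y -> P (lie_br x y).
Definition ideal_closed (L : lieAlg) (P : L -> Prop) : Prop :=
  subspace_closed P /\ forall x y : L, P y -> P (lie_br x y).

Definition derived (L : lieAlg) (v : L) : Prop :=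
  forall P : L -> Prop, subspace_closed P -> (forall x y, P (lie_br x y)) -> P v.
Definition gen_subalg (L : lieAlg) (S : L -> Prop) (v : L) : Prop :=
  forall P : L -> Prop, subalg_closed P -> (forall s, S s -> P s) -> P v.
Definition gen_ideal (L : lieAlg) (S : L -> Prop) (v : L) : Prop :=
  forall P : L -> Prop, ideal_closed P -> (forall s, S s -> P s) -> P v.

(* formal Lie expressions over generators X: they represent the elements
   of the free Lie algebra F(X) *)
Inductive lterm (X : Type) :=
  | LGen of X
  | LZero
  | LAdd of lterm X & lterm X
  | LScale of K & lterm X
  | LBr of lterm X & lterm X.

Fixpoint leval (L : lieAlg) (X : Type) (f : X -> L) (t : lterm X) : L :=
  match t with
  | LGen x => f x
  | LZero => 0
  | LAdd t1 t2 => leval f t1 + leval f t2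
  | LScale a t1 => a *: leval f t1
  | LBr t1 t2 => lie_br (leval f t1) (leval f t2)
  end.

Fixpoint lgens_in (X : finType) (S : {set X}) (t : lterm X) : Prop :=
  match t with
  | LGen x => x \in S
  | LZero => True
  | LAdd t1 t2 => lgens_in S t1 /\ lgens_in S t2
  | LScale _ t1 => lgens_in S t1
  | LBr t1 t2 => lgens_in S t1 /\ lgens_in S t2
  end.

(* (L, iota) is the Lie algebra F(S)/<rels> presented by generators S
   (a subset of X) and relations rels (terms in the generators S),
   characterised by its universal property. *)
Definition is_presentation (X : finType) (L : lieAlg) (iota : X -> L)
    (S : {set X}) (rels : lterm X -> Prop) : Prop :=
  (forall r, rels r -> leval iota r = 0) /\
  forall (M : lieAlg) (f : X -> M), (forall r, rels r -> leval f r = 0) ->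
    exists h : L -> M,
      [/\ lie_hom h, (forall x, x \in S -> h (iota x) = f x) &
        forall h' : L -> M, lie_hom h' ->
          (forall x, x \in S -> h' (iota x) = f x) -> forall v, h' v = h v].

End Lie.

Section Arr.
Variable E : finType.

Definition set_arrangement (cA : {set {set E}}) : Prop :=
  (forall A, A \in cA -> 3 <= #|A|)%N /\
  (forall A B, A \in cA -> B \in cA -> A != B -> #|A :&: B| <= 1)%N.

Definition supp (cB : {set {set E}}) : {set E} := \bigcup_(B in cB) B.

Definition closed_in (cA cB : {set {set E}}) : Prop :=
  forall A, A \in cA -> A \notin cB -> (#|A :&: supp cB| <= 1)%N.

Definition pres_rels (K : fieldType) (cB : {set {set E}})
    (RA : {set E} -> lterm K E -> Prop) (S : {set E}) (r : lterm K E) : Prop :=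
  (exists2 B, B \in cB & RA B r) \/
  exists x y, [/\ x \in S, y \in S,
    (forall B, B \in cB -> ~~ ((x \in B) && (y \in B))) &
    r = LBr (LGen K x) (LGen K y)].

(* replacement, phrased on the local Lie algebras L_A = F(A)/<R_A> *)
Definition replacement (K : fieldType) (cA : {set {set E}})
    (LA : {set E} -> lieAlg K) (iotaA : forall A, E -> LA A) : Prop :=
  forall A x, A \in cA -> x \in A ->
    (exists2 B, B \in cA & (B != A) && (x \in B)) ->
    forall v : LA A, derived v ->
      gen_subalg (fun w => exists y, y \in A :\ x /\ w = iotaA A y) v.

End Arr.

(* Main.v *)
Require Import Defs.
From mathcomp Require Import all_boot all_order all_algebra.
Import GRing.Theory.
Local Open Scope ring_scope.
From HB Require Import structures.
From mathcomp Require Import boolp.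
Set Implicit Arguments. Unset Strict Implicit. Unset Printing Implicit Defensive.

Section Basic.
Variables (K : fieldType) (L : lieAlg K).
Local Notation br := (@lie_br K L).

Lemma brDl (x y z : L) : br (x + y) z = br x z + br y z.
Proof. by have := lie_linl (lie_ax L) 1 x y z; rewrite !scale1r. Qed.
Lemma brDr (x y z : L) : br z (x + y) = br z x + br z y.
Proof. by have := lie_linr (lie_ax L) 1 x y z; rewrite !scale1r. Qed.
Lemma br0l (x : L) : br 0 x = 0.
Proof. have h := brDl 0 0 x; rewrite addr0 in h. by apply: (addrI (br 0 x)); rewrite addr0 -h. Qed.
Lemma br0r (x : L) : br x 0 = 0.
Proof. have h := brDr 0 0 x; rewrite addr0 in h. by apply: (addrI (br x 0)); rewrite addr0 -h. Qed.
Lemma brZl a (x y : L) : br (a *: x) y = a *: br x y.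
Proof. by have := lie_linl (lie_ax L) a x 0 y; rewrite addr0 br0l addr0. Qed.
Lemma brZr a (x y : L) : br y (a *: x) = a *: br y x.
Proof. by have := lie_linr (lie_ax L) a x 0 y; rewrite addr0 br0r addr0. Qed.
Lemma brNl (x y : L) : br (- x) y = - br x y.
Proof. by rewrite -scaleN1r brZl scaleN1r. Qed.
Lemma brNr (x y : L) : br y (- x) = - br y x.
Proof. by rewrite -scaleN1r brZr scaleN1r. Qed.
Lemma brBl (x y z : L) : br (x - y) z = br x z - br y z.
Proof. by rewrite brDl brNl. Qed.
Lemma brBr (x y z : L) : br z (x - y) = br z x - br z y.
Proof. by rewrite brDr brNr. Qed.
Lemma brxx (x : L) : br x x = 0.
Proof. exact: (lie_alt (lie_ax L)). Qed.
Lemma brC (x y : L) : br x y = - br y x.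
Proof.
have := brxx (x + y); rewrite brDl !brDr !brxx add0r addr0 => /eqP.
by rewrite addr_eq0 => /eqP.
Qed.
Lemma brJ (x y z : L) : br x (br y z) = br (br x y) z + br y (br x z).
Proof.
have J := lie_jacobi (lie_ax L) x y z.
rewrite (brC (br x y) z) (brC x z) brNr.
apply/eqP; rewrite -subr_eq0 -J opprD !opprK.
by rewrite -!addrA [br z _ + _]addrC.
Qed.
Lemma br_sumr I (r : seq I) (P : pred I) (F : I -> L) (x : L) :
  br x (\sum_(i <- r | P i) F i) = \sum_(i <- r | P i) br x (F i).
Proof. by apply: (big_morph (br x)); [move=> a b; exact: brDr | exact: br0r]. Qed.

Lemma subspace_opp (P : L -> Prop) : subspace_closed P -> forall x, P x -> P (- x).
Proof. by case=> P0 PD x Px; rewrite -scaleN1r -[_ *: x]addr0; apply: PD. Qed.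
Lemma subspace_add (P : L -> Prop) : subspace_closed P -> forall x y, P x -> P y -> P (x + y).
Proof. by case=> P0 PD x y Px Py; rewrite -(scale1r x); apply: PD. Qed.
Lemma subspace_sub (P : L -> Prop) : subspace_closed P -> forall x y, P x -> P y -> P (x - y).
Proof. by move=> sP x y Px Py; apply: subspace_add => //; apply: subspace_opp. Qed.
Lemma subspace_scale (P : L -> Prop) : subspace_closed P -> forall a x, P x -> P (a *: x).
Proof. by case=> P0 PD a x Px; rewrite -[_ *: x]addr0; apply: PD. Qed.
Lemma subspace_sum (P : L -> Prop) I (r : seq I) (Q : pred I) (F : I -> L) :
  subspace_closed P -> (forall i, Q i -> P (F i)) -> P (\sum_(i <- r | Q i) F i).
Proof.
move=> sP HF; apply: (big_ind P) => //; first by case: sP.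
exact: subspace_add.
Qed.

End Basic.

Section Hom.
Variables (K : fieldType) (L M : lieAlg K) (h : L -> M) (hh : lie_hom h).
Lemma homD x y : h (x + y) = h x + h y.
Proof. by have := hh.1 1 x y; rewrite !scale1r. Qed.
Lemma hom0 : h 0 = 0.
Proof. have := homD 0 0; rewrite addr0 => e. by apply: (addrI (h 0)); rewrite addr0 -e. Qed.
Lemma homZ a x : h (a *: x) = a *: h x.
Proof. by have := hh.1 a x 0; rewrite addr0 hom0 addr0. Qed.
Lemma homN x : h (- x) = - h x.
Proof. by rewrite -scaleN1r homZ scaleN1r. Qed.
Lemma homB x y : h (x - y) = h x - h y.
Proof. by rewrite homD homN. Qed.
Lemma homBr x y : h (lie_br x y) = lie_br (h x) (h y).
Proof. exact: hh.2. Qed.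
Lemma hom_sum I (r : seq I) (P : pred I) (F : I -> L) :
  h (\sum_(i <- r | P i) F i) = \sum_(i <- r | P i) h (F i).
Proof. by apply: (big_morph h); [exact: homD | exact: hom0]. Qed.
Lemma hom_leval X (f : X -> L) t : h (leval f t) = leval (fun x => h (f x)) t.
Proof.
elim: t => /= [x||t1 IH1 t2 IH2|a t IH|t1 IH1 t2 IH2] //.
- exact: hom0.
- by rewrite homD IH1 IH2.
- by rewrite homZ IH.
- by rewrite homBr IH1 IH2.
Qed.
End Hom.

Lemma hom_comp (K : fieldType) (L M N : lieAlg K) (h : L -> M) (g : M -> N) :
  lie_hom h -> lie_hom g -> lie_hom (fun x => g (h x)).
Proof.
move=> hh hg; split=> [a x y|x y]; first by rewrite hh.1 hg.1.
by rewrite hh.2 hg.2.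
Qed.
Lemma hom_id (K : fieldType) (L : lieAlg K) : lie_hom (fun x : L => x).
Proof. by []. Qed.

Lemma leval_ext (K : fieldType) (L : lieAlg K) (X : finType) (S : {set X})
  (f g : X -> L) t : lgens_in S t -> (forall x, x \in S -> f x = g x) ->
  leval f t = leval g t.
Proof.
move=> + fg; elim: t => /= [x|_|t1 IH1 t2 IH2 [/IH1 -> /IH2 ->]|a t IH /IH ->|t1 IH1 t2 IH2 [/IH1 -> /IH2 ->]] //.
exact: fg.
Qed.

Lemma lgens_sub (X : finType) (K : fieldType) (S T : {set X}) (t : lterm K X) :
  S \subset T -> lgens_in S t -> lgens_in T t.
Proof.
move=> /subsetP ST; elim: t => /= [x|_|t1 IH1 t2 IH2 [/IH1 ? /IH2 ?]|a t IH /IH ?|t1 IH1 t2 IH2 [/IH1 ? /IH2 ?]] //.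
exact: ST.
Qed.
Lemma lgens_setT (X : finType) (K : fieldType) (t : lterm K X) : lgens_in setT t.
Proof. by elim: t => //= *; rewrite in_setT. Qed.

Section Sub.
Variables (K : fieldType) (L : lieAlg K) (P : L -> Prop) (HP : Defs.subalg_closed P).
Definition subT := {v : L | P v}.
HB.instance Definition _ := gen_eqMixin subT.
HB.instance Definition _ := gen_choiceMixin subT.
Lemma subT_inj (u v : subT) : sval u = sval v -> u = v.
Proof. case: u v => [u pu] [v pv] /= e; subst v; congr exist; exact: Prop_irrelevance. Qed.
Let sP : subspace_closed P := HP.1.
Definition sub0 : subT := exist _ 0 sP.1.
Definition subadd (u v : subT) : subT :=
  exist _ (sval u + sval v) (subspace_add sP (svalP u) (svalP v)).
Definition subopp (u : subT) : subT := exist _ (- sval u) (subspace_opp sP (svalP u)).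
Definition subscale a (u : subT) : subT := exist _ (a *: sval u) (subspace_scale sP a (svalP u)).
Definition subbr (u v : subT) : subT := exist _ (lie_br (sval u) (sval v)) (HP.2 _ _ (svalP u) (svalP v)).
Lemma subaddA : associative subadd.
Proof. by move=> *; apply: subT_inj; rewrite /= addrA. Qed.
Lemma subaddC : commutative subadd.
Proof. by move=> *; apply: subT_inj; rewrite /= addrC. Qed.
Lemma subadd0 : left_id sub0 subadd.
Proof. by move=> *; apply: subT_inj; rewrite /= add0r. Qed.
Lemma subaddN : left_inverse sub0 subopp subadd.
Proof. by move=> *; apply: subT_inj; rewrite /= addNr. Qed.
HB.instance Definition _ := GRing.isZmodule.Build subT subaddA subaddC subadd0 subaddN.
Lemma subscaleA a b v : subscale a (subscale b v) = subscale (a * b) v.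
Proof. by apply: subT_inj; rewrite /= scalerA. Qed.
Lemma subscale1 : left_id 1 subscale.
Proof. by move=> *; apply: subT_inj; rewrite /= scale1r. Qed.
Lemma subscaleDr : right_distributive subscale +%R.
Proof. by move=> *; apply: subT_inj; rewrite /= scalerDr. Qed.
Lemma subscaleDl v : {morph subscale^~ v: a b / a + b}.
Proof. by move=> *; apply: subT_inj; rewrite /= scalerDl. Qed.
HB.instance Definition _ := GRing.Zmodule_isLmodule.Build K subT subscaleA subscale1 subscaleDr subscaleDl.
Lemma subax : lie_axioms (subbr : subT -> subT -> subT).
Proof.
split.
- by move=> a x y z; apply: subT_inj; rewrite /= (lie_linl (lie_ax L)).
- by move=> a x y z; apply: subT_inj; rewrite /= (lie_linr (lie_ax L)).
- by move=> x; apply: subT_inj; rewrite /= brxx.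
- by move=> x y z; apply: subT_inj; rewrite /= (lie_jacobi (lie_ax L)).
Qed.
Definition subLie : lieAlg K := LieAlg subax.
Lemma subval_hom : lie_hom (fun u : subLie => sval u).
Proof. by split. Qed.
End Sub.

Lemma gen_all (K : fieldType) (X : finType) (L : lieAlg K) (iota : X -> L)
  (S : {set X}) (rels : lterm K X -> Prop) :
  is_presentation iota S rels -> (forall r, rels r -> lgens_in S r) ->
  forall v, gen_subalg (fun w => exists2 x, x \in S & w = iota x) v.
Proof.
move=> [Hr Hu] Hg v Q HQ HS.
pose M := subLie HQ.
have inQ x : Q (if x \in S then iota x else 0).
  case: ifP => xS; last by case: HQ.1.
  by apply: HS; exists x.
pose f (x : X) : M := exist _ _ (inQ x).
have [|h [hh hS hu]] := Hu M f.
  move=> r rr; apply: subT_inj.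
  have -> := hom_leval (subval_hom HQ) f r.
  rewrite /= -(Hr r rr); apply: leval_ext (Hg r rr) _ => x xS /=.
  by rewrite xS.
have [h0 [_ _ hu0]] := Hu L iota Hr.
have e1 := hu0 (fun x => x) (hom_id L) (fun x _ => erefl) v.
have e2 := hu0 (fun x => sval (h x)) (hom_comp hh (subval_hom HQ)).
have -> : v = sval (h v).
  rewrite e2; first exact: e1.
  by move=> x xS /=; rewrite hS //= xS.
exact: svalP.
Qed.

Section Gen.
Variables (K : fieldType) (L : lieAlg K).
Local Notation br := (@lie_br K L).

Lemma gen_ideal_closed (S : L -> Prop) : ideal_closed (gen_ideal S).
Proof.
split; first split.
- by move=> P [[P0 _] _] _.
- by move=> a x y Hx Hy P HP HS; apply: HP.1.2; [apply: Hx | apply: Hy].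
- by move=> x y Hy P HP HS; apply: HP.2; apply: Hy.
Qed.
Lemma gen_ideal_in (S : L -> Prop) s : S s -> gen_ideal S s.
Proof. by move=> Ss P _ HS; apply: HS. Qed.
Lemma gen_subalg_closed (S : L -> Prop) : Defs.subalg_closed (gen_subalg S).
Proof.
split; first split.
- by move=> P [[P0 _] _] _.
- by move=> a x y Hx Hy P HP HS; apply: HP.1.2; [apply: Hx | apply: Hy].
- by move=> x y Hx Hy P HP HS; apply: HP.2; [apply: Hx | apply: Hy].
Qed.
Lemma gen_subalg_in (S : L -> Prop) s : S s -> gen_subalg S s.
Proof. by move=> Ss P _ HS; apply: HS. Qed.
Lemma derived_closed : subspace_closed (@derived K L).
Proof.
split.
- by move=> P [P0 _] _.
- by move=> a x y Hx Hy P HP HS; apply: HP.2; [apply: Hx | apply: Hy].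
Qed.
Lemma derived_br x y : derived (br x y).
Proof. by move=> P _ H. Qed.

Variables (G : L -> Prop) (Hgen : forall v, gen_subalg G v).

Lemma ideal_from_gens (P : L -> Prop) : subspace_closed P ->
  (forall g p, G g -> P p -> P (br g p)) -> forall l p, P p -> P (br l p).
Proof.
move=> sP HG l; have := @Hgen l (fun l : L => forall p, P p -> P (br l p)).
apply => //.
split; first split.
- by move=> p _; rewrite br0l; case: sP.
- move=> a x y Hx Hy p Pp; rewrite (lie_linl (lie_ax L)).
  by apply: sP.2; [apply: Hx | apply: Hy].
- move=> x y Hx Hy p Pp.
  have e := brJ x y p.
  have -> : br (br x y) p = br x (br y p) - br y (br x p) by rewrite e addrK.
  by apply: subspace_sub => //; [apply: Hx; apply: Hy | apply: Hy; apply: Hx].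
by move=> s Gs p Pp; apply: HG.
Qed.

Lemma derived_from_gens (P : L -> Prop) : subspace_closed P ->
  (forall l p, P p -> P (br l p)) -> (forall g g', G g -> G g' -> P (br g g')) ->
  forall v, derived v -> P v.
Proof.
move=> sP HI HG.
have step1 g : G g -> forall a, P (br a g).
  move=> Gg a; apply: (@Hgen a (fun a => P (br a g))).
  split; first split.
  - by rewrite br0l; case: sP.
  - by move=> b x y Hx Hy; rewrite (lie_linl (lie_ax L)); apply: sP.2.
  - move=> x y Hx Hy.
    have e := brJ x y g.
    have -> : br (br x y) g = br x (br y g) - br y (br x g) by rewrite e addrK.
    by apply: subspace_sub => //; apply: HI.
  by move=> s Gs; apply: HG.
have step2 b a : P (br a b).
  move: a; apply: (@Hgen b (fun b => forall a, P (br a b))).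
  split; first split.
  - by move=> a; rewrite br0r; case: sP.
  - by move=> c x y Hx Hy a; rewrite (lie_linr (lie_ax L)); apply: sP.2.
  - move=> x y Hx Hy a; rewrite brJ; apply: subspace_add => //.
    by apply: HI.
  by move=> s Gs; apply: step1.
by move=> v dv; apply: dv => // x y; apply: step2.
Qed.
End Gen.

Unset Implicit Arguments.
Section Main.
Variables (K : fieldType) (E : finType) (cA : {set {set E}})
  (RA : {set E} -> lterm K E -> Prop)
  (LA : {set E} -> lieAlg K) (iotaA : forall A, E -> LA A)
  (L : lieAlg K) (iota : E -> L)
  (k : nat) (cB : 'I_k -> {set {set E}})
  (LB : 'I_k -> lieAlg K) (iotaB : forall i, E -> LB i)
  (pi : forall i, L -> LB i).
Hypothesis HRA : forall A r, A \in cA -> RA A r -> lgens_in A r.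
Hypothesis HLA : forall A, A \in cA -> is_presentation (iotaA A) A (RA A).
Hypothesis HL : is_presentation iota setT (pres_rels cA RA setT).
Hypothesis Hrep : replacement cA iotaA.
Hypothesis Hdisj : forall i j, i != j -> [disjoint cB i & cB j].
Hypothesis Hsub : forall i, cB i \subset cA.
Hypothesis Hcl : forall i, closed_in cA (cB i).
Hypothesis Hcup : \bigcup_i cB i = cA.
Hypothesis HLB : forall i, is_presentation (iotaB i) (supp (cB i)) (pres_rels (cB i) RA (supp (cB i))).
Hypothesis Hpi : forall i, lie_hom (pi i) /\
     forall x, pi i (iota x) = if x \in supp (cB i) then iotaB i x else 0.

Local Notation S i := (supp (cB i)).

Lemma rel0 x y : (forall B, B \in cA -> ~~ ((x \in B) && (y \in B))) ->
  lie_br (iota x) (iota y) = 0.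
Proof.
move=> H; have := HL.1 (LBr (LGen K x) (LGen K y)); apply.
by right; exists x, y; split; rewrite ?in_setT.
Qed.

Lemma suppP i x : reflect (exists2 B, B \in cB i & x \in B) (x \in S i).
Proof. exact: bigcupP. Qed.

Lemma closed_eq i A x y : A \in cA -> A \notin cB i -> x \in A -> y \in A ->
  x \in S i -> y \in S i -> x = y.
Proof.
move=> HA nA xA yA xS yS; have := Hcl i A HA nA => /card_le1_eqP H.
by apply/esym; apply: H; rewrite inE ?xA ?yA.
Qed.

Lemma L_gen v : gen_subalg (fun w => exists2 x, x \in [set: E] & w = iota x) v.
Proof. by apply: (gen_all HL) => r _; apply: lgens_setT. Qed.

Lemma LB_gen i v : gen_subalg (fun w => exists2 x, x \in S i & w = iotaB i x) v.
Proof.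
apply: (gen_all (HLB i)) => r [[B HB Hr]|[x [y [xS yS _ ->]]]] //=.
apply: (lgens_sub _ (HRA B r (subsetP (Hsub i) _ HB) Hr)).
exact: bigcup_sup.
Qed.

Lemma phi_ex i : exists h : LB i -> L, lie_hom h /\ forall x, x \in S i -> h (iotaB i x) = iota x.
Proof.
have [|h [hh hS _]] := (HLB i).2 L iota; last by exists h.
move=> r [[B HB Hr]|[x [y [xS yS nB ->]]]].
  by apply: HL.1; left; exists B => //; apply: (subsetP (Hsub i)).
rewrite /=; have [->|nxy] := eqVneq x y; first exact: brxx.
apply: rel0 => B HB; apply/negP => /andP [xB yB].
have [BB|nBB] := boolP (B \in cB i); first by have := nB B BB; rewrite xB yB.
by move: nxy; rewrite (closed_eq _ _ _ _ HB nBB xB yB xS yS) eqxx.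
Qed.

Definition phi i := proj1_sig (cid (phi_ex i)).
Arguments phi : clear implicits.
Lemma phi_hom i : lie_hom (phi i).
Proof. exact: (proj2_sig (cid (phi_ex i))).1. Qed.
Lemma phi_gen i x : x \in S i -> phi i (iotaB i x) = iota x.
Proof. exact: (proj2_sig (cid (phi_ex i))).2. Qed.

Lemma pi_phi i u : pi i (phi i u) = u.
Proof.
have [h [hh hS hu]] := (HLB i).2 (LB i) (iotaB i) (HLB i).1.
have e1 := hu (fun u => u) (hom_id _) (fun x _ => erefl) u.
have e2 := hu (fun u => pi i (phi i u)) (hom_comp (phi_hom i) (Hpi i).1).
rewrite e2 -?e1 //.
by move=> x xS; rewrite phi_gen // (Hpi i).2 xS.
Qed.

Lemma comm_ij i j y z : i != j -> y \in S i -> z \in S i ->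
  lie_br (pi j (iota y)) (pi j (iota z)) = 0.
Proof.
move=> nij yS zS; rewrite !(Hpi j).2.
case: ifP => yj; last by rewrite br0l.
case: ifP => zj; last by rewrite br0r.
have [->|nyz] := eqVneq y z; first exact: brxx.
have := (HLB j).1 (LBr (LGen K y) (LGen K z)); apply.
right; exists y, z; split => // B HB; apply/negP => /andP [yB zB].
have HBA := subsetP (Hsub j) _ HB.
have nBi : B \notin cB i.
  by apply/negP => Bi; have := disjointFr (Hdisj i j nij) Bi; rewrite HB.
by move: nyz; rewrite (closed_eq _ _ _ _ HBA nBi yB zB yS zS) eqxx.
Qed.

Lemma pi_phi_other i j u : i != j -> derived u -> pi j (phi i u) = 0.
Proof.
move=> nij; have hc := hom_comp (phi_hom i) (Hpi j).1.
move=> du; apply: (@derived_from_gens _ _ _ (LB_gen i) (fun u => pi j (phi i u) = 0) _ _ _ u du).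
- split; first exact: hom0 hc.
  by move=> a x y Hx Hy; rewrite hc.1 Hx Hy scaler0 addr0.
- by move=> l p Hp; rewrite hc.2 Hp br0r.
- move=> g g' [y yS ->] [z zS ->].
  by rewrite hc.2 !phi_gen //; apply: comm_ij nij yS zS.
Qed.

Definition T (w : L) := exists i x y z,
  [/\ y \in S i, z \in S i, x \notin S i &
      w = lie_br (iota x) (lie_br (iota y) (iota z))].
Definition J (v : L) := derived v /\ forall i, pi i v = 0.
Definition Ng i (w : L) := exists x, x \notin S i /\ w = iota x.
Definition H i := gen_subalg (Ng i).
Definition I := gen_ideal T.

Lemma Hsp i : subspace_closed (H i).
Proof. exact: (@gen_subalg_closed K L (Ng i)).1. Qed.
Lemma H0 i : H i 0.
Proof. exact: (Hsp i).1. Qed.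
Lemma HD i a u v : H i u -> H i v -> H i (a *: u + v).
Proof. exact: (Hsp i).2. Qed.
Lemma Hbr i u v : H i u -> H i v -> H i (lie_br u v).
Proof. exact: (@gen_subalg_closed K L (Ng i)).2. Qed.
Lemma Isp : subspace_closed I.
Proof. exact: (@gen_ideal_closed K L T).1. Qed.
Lemma I0 : I 0.
Proof. exact: Isp.1. Qed.
Lemma ID a u v : I u -> I v -> I (a *: u + v).
Proof. exact: Isp.2. Qed.
Lemma Iadd u v : I u -> I v -> I (u + v).
Proof. by move=> Iu Iv; apply: (subspace_add Isp). Qed.
Lemma Ibr l v : I v -> I (lie_br l v).
Proof. exact: (@gen_ideal_closed K L T).2. Qed.
Lemma derived0 (M : lieAlg K) : derived (0 : M).
Proof. exact: (@derived_closed K M).1. Qed.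

Lemma T_J w : T w -> J w.
Proof.
move=> [i [x [y [z [yS zS xS ->]]]]]; split; first exact: derived_br.
move=> j; rewrite !(Hpi j).1.2; have [<-|nij] := eqVneq i j.
  by rewrite (Hpi i).2 (negbTE xS) br0l.
by rewrite (comm_ij _ _ _ _ nij yS zS) br0r.
Qed.

Lemma J_ideal : ideal_closed J.
Proof.
split; first split.
- by split; [exact: derived0 | move=> i; rewrite (hom0 (Hpi i).1)].
- move=> a x y [dx px] [dy py]; split; first exact: (@derived_closed K L).2.
  by move=> i; rewrite (Hpi i).1.1 px py scaler0 addr0.
- move=> x y [dy py]; split; first exact: derived_br.
  by move=> i; rewrite (Hpi i).1.2 py br0r.
Qed.

Lemma I_J v : I v -> J v.
Proof. by move=> Iv; apply: Iv J_ideal T_J. Qed.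

Lemma rep_H i x y : x \in S i -> y \notin S i -> H i (lie_br (iota x) (iota y)).
Proof.
move=> xS yS.
case: (boolP [exists A in cA, (x \in A) && (y \in A)]) => [/exists_inP [A HA /andP [xA yA]]|/exists_inP nA]; last first.
  rewrite rel0; first exact: H0.
  by move=> B HB; apply/negP => xyB; apply: nA; exists B.
have nAi : A \notin cB i.
  by apply/negP => Ai; move/negP: yS; apply; apply/bigcupP; exists A.
have /bigcupP [B Bi xB] := xS.
have HBA : B \in cA := subsetP (Hsub i) _ Bi.
have nBA : B != A by apply: contraNneq nAi => <-.
have rep := Hrep A x HA xA (ex_intro2 _ _ B HBA (introT andP (conj nBA xB))).
have [rho [hr hrS _]] := (HLA A HA).2 L iota
   (fun r Hr => HL.1 r (or_introl (ex_intro2 _ _ A HA Hr))).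
have G := rep (lie_br (iotaA A x) (iotaA A y)) (derived_br _ _) (fun w => H i (rho w)).
have : H i (rho (lie_br (iotaA A x) (iotaA A y))).
  apply: G.
    split; first split.
    - by rewrite (hom0 hr); exact: H0.
    - by move=> a u v Hu Hv; rewrite hr.1; exact: HD.
    - by move=> u v Hu Hv; rewrite hr.2; exact: Hbr.
  move=> s [z [zA' ->]]; move: zA'; rewrite in_setD1 => /andP [zx zA].
  rewrite hrS //; apply: gen_subalg_in; exists z; split => //.
  apply/negP => zS; move: zx.
  by rewrite (closed_eq _ _ _ _ HA nAi zA xA zS xS) eqxx.
by rewrite (homBr hr) !hrS.
Qed.

Lemma H_ideal i l h : H i h -> H i (lie_br l h).
Proof.
move: l h; apply: (@ideal_from_gens _ _ _ L_gen (H i) (Hsp i)).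
move=> g p [x _ ->] Hp.
case: (boolP (x \in S i)) => xS; last first.
  by apply: Hbr Hp; apply: gen_subalg_in; exists x.
have : H i p /\ H i (lie_br (iota x) p).
  apply: (Hp (fun p => H i p /\ H i (lie_br (iota x) p))).
    split; first split.
    - by split; [exact: H0 | rewrite br0r; exact: H0].
    - move=> a u v [Hu Hu'] [Hv Hv']; split; first exact: HD.
      by rewrite (lie_linr (lie_ax L)); exact: HD.
    - move=> u v [Hu Hu'] [Hv Hv']; split; first exact: Hbr.
      by rewrite brJ; apply: (subspace_add (Hsp i)); exact: Hbr.
  move=> s [y [yS ->]]; split; first by apply: gen_subalg_in; exists y.
  exact: rep_H.
by case.
Qed.

Lemma H_ker i w : H i w -> pi i w = 0.
Proof.
move=> Hw; apply: (Hw (fun w => pi i w = 0)).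
  split; first split.
  - exact: hom0 (Hpi i).1.
  - by move=> a x y Hx Hy; rewrite (Hpi i).1.1 Hx Hy scaler0 addr0.
  - by move=> x y Hx Hy; rewrite (Hpi i).1.2 Hx br0l.
by move=> s [x [xS ->]]; rewrite (Hpi i).2 (negbTE xS).
Qed.

Lemma part3 i v : pi i v = 0 <-> H i v.
Proof.
split; last exact: H_ker.
move=> piv.
have [u Hu] : exists u, H i (v - phi i u).
  apply: (L_gen v (fun v => exists u, H i (v - phi i u))).
    split; first split.
    - by exists 0; rewrite (hom0 (phi_hom i)) subr0; exact: H0.
    - move=> a v1 v2 [u1 H1] [u2 H2]; exists (a *: u1 + u2); rewrite (phi_hom i).1.
      have -> : a *: v1 + v2 - (a *: phi i u1 + phi i u2) =
                a *: (v1 - phi i u1) + (v2 - phi i u2).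
        by rewrite scalerBr opprD addrACA.
      exact: HD.
    - move=> v1 v2 [u1 H1] [u2 H2]; exists (lie_br u1 u2); rewrite (phi_hom i).2.
      have -> : lie_br v1 v2 - lie_br (phi i u1) (phi i u2) =
         lie_br (v1 - phi i u1) v2 + lie_br (phi i u1) (v2 - phi i u2).
        by rewrite brBl brBr addrA subrK.
      apply: (subspace_add (Hsp i)); last exact: H_ideal.
      by rewrite brC; apply: (subspace_opp (Hsp i)); exact: H_ideal.
  move=> s [x _ ->]; case: (boolP (x \in S i)) => xS.
    by exists (iotaB i x); rewrite phi_gen // subrr; exact: H0.
  by exists 0; rewrite (hom0 (phi_hom i)) subr0; apply: gen_subalg_in; exists x.
have := H_ker i _ Hu; rewrite (homB (Hpi i).1) piv pi_phi sub0r => /eqP.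
rewrite oppr_eq0 => /eqP u0; move: Hu.
by rewrite u0 (hom0 (phi_hom i)) subr0.
Qed.

Lemma Q_lemma i x u : x \notin S i -> derived u -> I (lie_br (iota x) (phi i u)).
Proof.
move=> xS du.
suff: forall h, H i h -> I (lie_br h (phi i u)).
  by apply; apply: gen_subalg_in; exists x.
pose P (u : LB i) := forall h, H i h -> I (lie_br h (phi i u)).
have sP : subspace_closed P.
  split.
  - by move=> h _; rewrite (hom0 (phi_hom i)) br0r; exact: I0.
  - move=> a u1 u2 P1 P2 h Hh; rewrite (phi_hom i).1 (lie_linr (lie_ax L)).
    by apply: ID; [apply: P1 | apply: P2].
have iP : forall l p, P p -> P (lie_br l p).
  apply: (@ideal_from_gens _ _ _ (LB_gen i) P sP).
  move=> g p [z zS ->] Pp h Hh; rewrite (phi_hom i).2 phi_gen // brJ.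
  apply: Iadd; last by apply: Ibr; apply: Pp.
  apply: Pp; rewrite brC; apply: (subspace_opp (Hsp i)); exact: H_ideal.
apply: (@derived_from_gens _ _ _ (LB_gen i) P sP iP _ u du).
move=> g g' [y yS ->] [z zS ->] h Hh; rewrite (phi_hom i).2 !phi_gen //.
apply: (Hh (fun h => I (lie_br h (lie_br (iota y) (iota z))))).
  split; first split.
  - by rewrite br0l; exact: I0.
  - by move=> a h1 h2 I1 I2; rewrite (lie_linl (lie_ax L)); exact: ID.
  - move=> h1 h2 I1 I2.
    set c := lie_br (iota y) (iota z).
    have e := brJ h1 h2 c.
    have -> : lie_br (lie_br h1 h2) c = lie_br h1 (lie_br h2 c) - lie_br h2 (lie_br h1 c)
      by rewrite e addrK.
    by apply: (subspace_sub Isp); apply: Ibr.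
by move=> s [n [nS ->]]; apply: gen_ideal_in; exists i, n, y, z; split.
Qed.

Definition Dp (v : L) := exists w : 'I_k -> L,
  (forall i, exists u, derived u /\ w i = phi i u) /\ I (v - \sum_(i < k) w i).

Lemma D0 : Dp 0.
Proof.
exists (fun _ => 0); split.
  by move=> i; exists 0; split; [exact: derived0 | rewrite (hom0 (phi_hom i))].
by rewrite big1 // subr0; exact: I0.
Qed.

Lemma sD : subspace_closed Dp.
Proof.
split; first exact: D0.
move=> a v1 v2 [w1 [Hw1 I1]] [w2 [Hw2 I2]].
exists (fun i => a *: w1 i + w2 i); split.
  move=> i; have [u1 [d1 e1]] := Hw1 i; have [u2 [d2 e2]] := Hw2 i.
  exists (a *: u1 + u2); split; first exact: (@derived_closed K (LB i)).2.
  by rewrite (phi_hom i).1 e1 e2.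
rewrite big_split /= -scaler_sumr.
have -> : a *: v1 + v2 - (a *: \sum_(i < k) w1 i + \sum_(i < k) w2 i) =
   a *: (v1 - \sum_(i < k) w1 i) + (v2 - \sum_(i < k) w2 i).
  by rewrite scalerBr opprD addrACA.
exact: ID.
Qed.

Lemma iD l p : Dp p -> Dp (lie_br l p).
Proof.
move: l p; apply: (@ideal_from_gens _ _ _ L_gen Dp sD).
move=> g p [x _ ->] [w [Hw Ip]].
exists (fun i => if x \in S i then lie_br (iota x) (w i) else 0); split.
  move=> i; have [u [du e]] := Hw i; case: ifP => xS.
    exists (lie_br (iotaB i x) u); split; first exact: derived_br.
    by rewrite (phi_hom i).2 phi_gen // e.
  by exists 0; split; [exact: derived0 | rewrite (hom0 (phi_hom i))].
have -> : lie_br (iota x) p - \sum_(i < k) (if x \in S i then lie_br (iota x) (w i) else 0)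
   = lie_br (iota x) (p - \sum_(i < k) w i) +
     \sum_(i < k) (lie_br (iota x) (w i) - (if x \in S i then lie_br (iota x) (w i) else 0)).
  by rewrite brBr br_sumr sumrB addrA subrK.
apply: Iadd; first exact: Ibr.
apply: (subspace_sum _ Isp) => i _; case: ifP => xS.
  by rewrite subrr; exact: I0.
rewrite subr0; have [u [du ->]] := Hw i.
exact: Q_lemma (negbT xS) du.
Qed.

Lemma D_gens g g' : (exists2 x, x \in [set: E] & g = iota x) ->
  (exists2 x, x \in [set: E] & g' = iota x) -> Dp (lie_br g g').
Proof.
move=> [x _ ->] [y _ ->].
case: (boolP [exists A in cA, (x \in A) && (y \in A)]) => [/exists_inP [A HA /andP [xA yA]]|/exists_inP nA]; last first.
  rewrite rel0; first exact: D0.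
  by move=> B HB; apply/negP => xyB; apply: nA; exists B.
have : A \in \bigcup_i cB i by rewrite Hcup.
move=> /bigcupP [i _ Ai].
have xS : x \in S i by apply/bigcupP; exists A.
have yS : y \in S i by apply/bigcupP; exists A.
exists (fun j => if j == i then lie_br (iota x) (iota y) else 0); split.
  move=> j; case: eqP => [->|_].
    exists (lie_br (iotaB i x) (iotaB i y)); split; first exact: derived_br.
    by rewrite (phi_hom i).2 !phi_gen.
  by exists 0; split; [exact: derived0 | rewrite (hom0 (phi_hom j))].
by rewrite -big_mkcond big_pred1_eq subrr; exact: I0.
Qed.

Lemma part1 v : J v <-> I v.
Proof.
split; last exact: I_J.
move=> [dv pv].
have [w [Hw Iv]] := @derived_from_gens _ _ _ L_gen Dp sD iD D_gens v dv.
have w0 : forall j, w j = 0.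
  move=> j; have [u [du e]] := Hw j.
  have := (I_J _ Iv).2 j.
  rewrite (homB (Hpi j).1) pv sub0r (hom_sum (Hpi j).1) (bigD1 j) //= big1 ?addr0.
    rewrite e pi_phi => /eqP; rewrite oppr_eq0 => /eqP ->; exact: hom0 (phi_hom j).
  by move=> i nij; have [u' [du' ->]] := Hw i; exact: pi_phi_other i j u' nij du'.
by move: Iv; rewrite big1 ?subr0 // => i _; exact: w0.
Qed.

Lemma main_sec :
  let J := fun v : L => derived v /\ forall i, pi i v = 0 in
  let T := fun w : L => exists i x y z,
      [/\ y \in supp (cB i), z \in supp (cB i), x \notin supp (cB i) &
          w = lie_br (iota x) (lie_br (iota y) (iota z))] in
  [/\ (forall v, J v <-> gen_ideal T v),
      ((forall v, J v -> v = 0) <->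
         (forall i x y z, y \in supp (cB i) -> z \in supp (cB i) ->
            x \notin supp (cB i) ->
            lie_br (iota x) (lie_br (iota y) (iota z)) = 0)) &
      (forall i (v : L), pi i v = 0 <->
         gen_subalg (fun w => exists x, x \notin supp (cB i) /\ w = iota x) v)].
Proof.
move=> J' T'; split.
- exact: part1.
- split.
    move=> Hz i x y z yS zS xS; by apply: Hz; apply: T_J; exists i, x, y, z; split.
  move=> Hz v Jv; have Iv := (part1 v).1 Jv.
  apply: (Iv (fun v => v = 0)).
    split; first split => //.
    - by move=> a x y -> ->; rewrite scaler0 addr0.
    - by move=> x y ->; exact: br0r.
  by move=> s [i [x [y [z [yS zS xS ->]]]]]; apply: (Hz i x y z).
- exact: part3.
Qed.
End Main.

Theorem mainTheorem3 (K : fieldType) (E : finType) (cA : {set {set E}})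
  (RA : {set E} -> lterm K E -> Prop)
  (F : {set E} -> lieAlg K) (iotaF : forall A, E -> F A)
  (LA : {set E} -> lieAlg K) (iotaA : forall A, E -> LA A)
  (L : lieAlg K) (iota : E -> L)
  (k : nat) (cB : 'I_k -> {set {set E}})
  (LB : 'I_k -> lieAlg K) (iotaB : forall i, E -> LB i)
  (pi : forall i, L -> LB i) :
  set_arrangement cA ->
  (* F(A) is the free Lie algebra on A *)
  (forall A, A \in cA -> is_presentation (iotaF A) A (fun _ => False)) ->
  (* R_A consists of elements of [F(A), F(A)] *)
  (forall A r, A \in cA -> RA A r -> lgens_in A r /\ derived (leval (iotaF A) r)) ->
  (* L_A = F(A)/<R_A> *)
  (forall A, A \in cA -> is_presentation (iotaA A) A (RA A)) ->
  (* \mathcal L = F(E)/<R> *)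
  is_presentation iota setT (pres_rels cA RA setT) ->
  replacement cA iotaA ->
  (forall i j, i != j -> [disjoint cB i & cB j]) ->
  (forall i, cB i \subset cA) ->
  (forall i, closed_in cA (cB i)) ->
  \bigcup_i cB i = cA ->
  (* L_{B_i} = F(supp B_i)/<R_{B_i}> *)
  (forall i, is_presentation (iotaB i) (supp (cB i)) (pres_rels (cB i) RA (supp (cB i)))) ->
  (* pi_{B_i} *)
  (forall i, lie_hom (pi i) /\
     forall x, pi i (iota x) = if x \in supp (cB i) then iotaB i x else 0) ->
  let J := fun v : L => derived v /\ forall i, pi i v = 0 in
  let T := fun w : L => exists i x y z,
      [/\ y \in supp (cB i), z \in supp (cB i), x \notin supp (cB i) &
          w = lie_br (iota x) (lie_br (iota y) (iota z))] in
  [/\ (forall v, J v <-> gen_ideal T v),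
      ((forall v, J v -> v = 0) <->
         (forall i x y z, y \in supp (cB i) -> z \in supp (cB i) ->
            x \notin supp (cB i) ->
            lie_br (iota x) (lie_br (iota y) (iota z)) = 0)) &
      (forall i (v : L), pi i v = 0 <->
         gen_subalg (fun w => exists x, x \notin supp (cB i) /\ w = iota x) v)].
Proof.
move=> _ _ HRA' HLA HL Hrep Hdisj Hsub Hcl Hcup HLB Hpi.
exact: (@main_sec K E cA RA LA iotaA L iota k cB LB iotaB pi
  (fun A r HA Hr => (HRA' A r HA Hr).1) HLA HL Hrep Hdisj Hsub Hcl Hcup HLB Hpi).
Qed.
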